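(* Let $K\ge1$, $p_1,\dots,p_K>0$, $c_1,\dots,c_K>0$, and let $\bar B=\frac12\sum_{k=1}^Kp_kc_k$. For $B>0$ consider the problem $$\max_{\mathbf{a}}\ -\sum_{k=1}^K\big[(p_k-a_k)\log(p_k-a_k)+a_k\log a_k\big]\quad\text{s.t.}\quad\sum_{k=1}^Ka_kc_k\le B,\ \ 0\le a_k\le p_k\ \forall k.$$ There is a unique function $\lambda(B)\ge0$, which is one-to-one for $0<B\le\bar B$ and satisfies $\lambda(B)=0$ for $B\ge\bar B$, such that the problem has a unique solution, given by $$a^*_k(B)=\frac{p_k}{1+\exp[\lambda(B)c_k]},\qquad k\in[K].$$
   Context: Here $0\log 0=0$. In the paper $p_k$ is the average (per vertex) number of vertex pairs at distance scale $k$ and $c_k$ the cost of a pair at scale $k$. *)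

(* Defs.v *)
From HB Require Import structures.
From mathcomp Require Import all_boot all_order all_algebra.
From mathcomp Require Import all_classical all_reals all_analysis.
Set Implicit Arguments. Unset Strict Implicit. Unset Printing Implicit Defensive.
Import Order.TTheory GRing.Theory Num.Theory.
Local Open Scope ring_scope.

Definition xlogx {R : realType} (x : R) : R := if x == 0 then 0 else x * ln x.

Definition objective {R : realType} (K : nat) (p a : 'I_K -> R) : R :=
  - \sum_(k < K) (xlogx (p k - a k) + xlogx (a k)).

Definition feasible {R : realType} (K : nat) (p c : 'I_K -> R) (B : R)
  (a : 'I_K -> R) : Prop :=
  \sum_(k < K) a k * c k <= B /\ (forall k, 0 <= a k <= p k).

Definition is_solution {R : realType} (K : nat) (p c : 'I_K -> R) (B : R)
  (a : 'I_K -> R) : Prop :=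
  feasible p c B a /\
  (forall b, feasible p c B b -> objective p b <= objective p a).

Definition is_unique_solution {R : realType} (K : nat) (p c : 'I_K -> R) (B : R)
  (a : 'I_K -> R) : Prop :=
  is_solution p c B a /\ (forall b, is_solution p c B b -> b = a).

Definition astar {R : realType} (K : nat) (p c : 'I_K -> R) (l : R) : 'I_K -> R :=
  fun k => p k / (1 + expR (l * c k)).

Definition Bbar {R : realType} (K : nat) (p c : 'I_K -> R) : R :=
  2^-1 * \sum_(k < K) p k * c k.

Definition good_lambda {R : realType} (K : nat) (p c : 'I_K -> R)
  (lam : R -> R) : Prop :=
  (forall B, 0 < B -> 0 <= lam B) /\
  (forall B1 B2, 0 < B1 -> B1 <= Bbar p c -> 0 < B2 -> B2 <= Bbar p c ->
      lam B1 = lam B2 -> B1 = B2) /\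
  (forall B, Bbar p c <= B -> lam B = 0) /\
  (forall B, 0 < B -> is_unique_solution p c B (astar p c (lam B))).

(* Main.v *)
Require Import Defs.
From HB Require Import structures.
From mathcomp Require Import all_boot all_order all_algebra.
From mathcomp Require Import all_classical all_reals all_analysis.
From mathcomp Require Import ring lra.
Import Order.TTheory GRing.Theory Num.Theory.
Import numFieldNormedType.Exports.
Local Open Scope ring_scope.

Lemma term_cont {R : realType} (a c : R) :
  continuous (fun l : R => a / (1 + expR (l * c)) * c).
Proof.
move=> x.
have h1 : {for x, continuous (fun l : R => l * c)}.
  apply: (@continuousM R R id (fun=> c) x); [exact: cvg_id| exact: cst_continuous].
have h2 : {for x, continuous (fun l : R => expR (l * c))}.
  apply: (@continuous_comp _ _ _ (fun l : R => l * c) expR x h1).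
  exact: continuous_expR.
have h3 : {for x, continuous (fun l : R => 1 + expR (l * c))}.
  apply: (@continuousD R R R (fun=> 1) (fun l => expR (l * c)) x) => //.
  exact: cst_continuous.
have h4 : {for x, continuous (fun l : R => (1 + expR (l * c))^-1)}.
  apply: (@continuousV R R (fun l => 1 + expR (l * c)) x) => //.
have h5 : {for x, continuous (fun l : R => a / (1 + expR (l * c)))}.
  apply: (@continuousM R R (fun=> a) (fun l => (1 + expR (l * c))^-1) x) => //.
  exact: cst_continuous.
apply: (@continuousM R R (fun l => a / (1 + expR (l * c))) (fun=> c) x) => //.
exact: cst_continuous.
Qed.

Lemma gsum_cont {R : realType} (K : nat) (p c : 'I_K -> R) :
  continuous (fun l : R => \sum_(k < K) astar p c l k * c k).
Proof.
rewrite /astar.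
suff H : forall s : seq 'I_K, continuous (fun l : R => \sum_(k <- s) p k / (1 + expR (l * c k)) * c k).
  exact: H.
elim=> [|k s IH] x.
  under eq_fun do rewrite big_nil. exact: cst_continuous.
under eq_fun do rewrite big_cons.
apply: (@continuousD R R R (fun l => p k / (1 + expR (l * c k)) * c k)); last exact: IH.
exact: term_cont.
Qed.

Lemma xlogx_pos {R : realType} (x : R) : 0 < x -> xlogx x = x * ln x.
Proof. by move=> hx; rewrite /xlogx gt_eqF. Qed.

Lemma tangent {R : realType} (x y : R) : 0 < x -> 0 <= y ->
  0 <= xlogx y - xlogx x - (ln x + 1) * (y - x) /\
  (xlogx y - xlogx x - (ln x + 1) * (y - x) = 0 -> y = x).
Proof.
move=> hx; rewrite le_eqVlt => /orP [/eqP <-|hy].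
  rewrite /xlogx eqxx (gt_eqF hx).
  have -> : 0 - x * ln x - (ln x + 1) * (0 - x) = x by ring.
  split; first exact: ltW.
  by move=> h; rewrite h in hx; rewrite ltxx in hx.
rewrite !xlogx_pos //.
set u := ln x - ln y.
have hu : y * expR u = x.
  rewrite /u expRB !lnK ?posrE //. by rewrite mulrC divfK // gt_eqF.
have -> : y * ln y - x * ln x - (ln x + 1) * (y - x) = y * (expR u - 1 - u).
  have -> : y * (expR u - 1 - u) = y * expR u - y - y * u by ring.
  rewrite hu /u; ring.
split.
  apply: mulr_ge0; first exact: ltW.
  by rewrite subr_ge0 lerBrDl expR_ge1Dx.
move/eqP; rewrite mulf_eq0 (gt_eqF hy) /= => /eqP h.
have u0 : u = 0.
  apply/eqP; apply/negPn/negP => /expR_gt1Dx hlt.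
  move: h hlt; lra.
have : ln x = ln y by apply/eqP; rewrite -subr_eq0; apply/eqP.
move/ln_inj => -> //; by rewrite posrE.
Qed.

Lemma coord_ent {R : realType} (p a b lc : R) : 0 < a -> a < p -> 0 <= b <= p ->
  ln (p - a) = ln a + lc ->
  0 <= (xlogx (p - b) + xlogx b) - (xlogx (p - a) + xlogx a) + lc * (b - a) /\
  ((xlogx (p - b) + xlogx b) - (xlogx (p - a) + xlogx a) + lc * (b - a) = 0 -> b = a).
Proof.
move=> ha hap /andP [hb hbp] hl.
have [t1 t1e] := @tangent _ a b ha hb.
have hpa : 0 < p - a by rewrite subr_gt0.
have hpb : 0 <= p - b by rewrite subr_ge0.
have [t2 t2e] := @tangent _ _ _ hpa hpb.
rewrite hl in t2 t2e.
have E : (xlogx (p - b) + xlogx b) - (xlogx (p - a) + xlogx a) + lc * (b - a) =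
  (xlogx b - xlogx a - (ln a + 1) * (b - a)) +
  (xlogx (p - b) - xlogx (p - a) - (ln a + lc + 1) * (p - b - (p - a))) by ring.
rewrite E; split; first exact: addr_ge0.
move=> /eqP; rewrite paddr_eq0 // => /andP [/eqP h _]; exact: t1e.
Qed.

Lemma astar_facts {R : realType} (p c l : R) : 0 < p ->
  let a := p / (1 + expR (l * c)) in
  0 < a /\ a < p /\ ln (p - a) = ln a + l * c.
Proof.
move=> hp a.
have he := expR_gt0 (l * c).
have h1 : 0 < 1 + expR (l * c) by lra.
have ha : 0 < a by rewrite /a divr_gt0.
have hpa : p - a = a * expR (l * c).
  rewrite /a; field; lra.
split=> //; split.
  rewrite /a ltr_pdivrMr //; nra.
rewrite hpa lnM ?posrE // expRK //.
Qed.

Lemma opt {R : realType} (K : nat) (p c : 'I_K -> R) (B l : R) :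
  (forall k, 0 < p k) -> 0 <= l ->
  \sum_(k < K) astar p c l k * c k <= B ->
  l * (B - \sum_(k < K) astar p c l k * c k) = 0 ->
  is_unique_solution p c B (astar p c l).
Proof.
move=> hp hl hB hcs.
set a := astar p c l.
have ha : forall k, 0 < a k /\ a k < p k /\ ln (p k - a k) = ln (a k) + l * c k.
  move=> k; exact: (@astar_facts _ (p k) (c k) l (hp k)).
have feas : feasible p c B a.
  split=> // k; have [h1 [h2 _]] := ha k; apply/andP; split; exact: ltW.
pose X (b : 'I_K -> R) k := xlogx (p k - b k) + xlogx (b k).
pose D (b : 'I_K -> R) k := X b k - X a k + l * c k * (b k - a k).
have key : forall b, feasible p c B b ->
  (forall k, 0 <= D b k /\ (D b k = 0 -> b k = a k)) /\
  \sum_(k < K) D b k <= objective p a - objective p b.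
  move=> b [hbB hbk]; split.
    move=> k; have [h1 [h2 h3]] := ha k.
    have := @coord_ent _ _ _ (b k) _ h1 h2 (hbk k) h3.
    by rewrite /D /X -mulrA.
  have E : \sum_(k < K) D b k = objective p a - objective p b +
     l * (\sum_(k < K) b k * c k - \sum_(k < K) a k * c k).
    have E1 : \sum_(k < K) l * c k * (b k - a k) =
       l * (\sum_(k < K) b k * c k - \sum_(k < K) a k * c k).
      by rewrite mulrBr !mulr_sumr -sumrB; apply: eq_bigr => k _; ring.
    rewrite /objective /D big_split /= sumrB E1 /X /=; ring.
  rewrite E gerDl.
  have -> : l * (\sum_(k < K) b k * c k - \sum_(k < K) a k * c k) =
     l * (\sum_(k < K) b k * c k - B) + l * (B - \sum_(k < K) a k * c k) by ring.
  rewrite hcs addr0; apply: mulr_ge0_le0 => //; by rewrite subr_le0.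
split.
  split=> // b hb; have [_ h] := key b hb.
  rewrite -subr_ge0; apply: le_trans h; apply: sumr_ge0 => k _; exact: ((key b hb).1 k).1.
move=> b [hb hmax].
have [hD hs] := key b hb.
have hle : objective p a - objective p b <= 0 by rewrite subr_le0; exact: hmax.
have s0 : \sum_(k < K) D b k == 0.
  rewrite eq_le (le_trans hs hle) /=; apply: sumr_ge0 => k _; exact: (hD k).1.
have := (psumr_eq0P (fun k _ => (hD k).1)) (eqP s0).
move=> hz; apply: funext => k; apply: (hD k).2; exact: hz.
Qed.

Theorem lemma2 (R : realType) (K : nat) (p c : 'I_K -> R)
  (hK : (1 <= K)%N) (hp : forall k, 0 < p k) (hc : forall k, 0 < c k) :
  exists lam : R -> R,
    good_lambda p c lam /\
    (forall lam' : R -> R, good_lambda p c lam' ->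
       forall B, 0 < B -> lam' B = lam B).
Proof.
pose g (l : R) := \sum_(k < K) astar p c l k * c k.
have g0 : g 0 = Bbar p c.
  rewrite /g /Bbar /astar mulr_sumr; apply: eq_bigr => k _.
  by rewrite mul0r expR0; field.
have ex : forall B : R, exists l : R, 0 <= l /\
   (0 < B -> is_unique_solution p c B (astar p c l)) /\
   (0 < B -> B <= Bbar p c -> g l = B) /\ (Bbar p c <= B -> l = 0).
  move=> B.
  have [hBb|hBb] := leP (Bbar p c) B.
    exists 0; split=> //; split; last split=> //.
      move=> _; apply: opt => //; first by rewrite -/(g 0) g0.
      by rewrite mul0r.
    by move=> _ h; rewrite g0; apply/eqP; rewrite eq_le h hBb.
  have [hB0|hB0] := leP B 0.
    by exists 0; split=> //.
  pose S := \sum_(k < K) p k.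
  have S0 : 0 <= S by apply: sumr_ge0 => k _; exact: ltW.
  pose L := 2 * (S + 1) / B.
  have L0 : 0 < L by rewrite /L divr_gt0 //; lra.
  have gL : g L < B.
    have h1 : g L <= \sum_(k < K) p k / L.
      apply: ler_sum => k _; rewrite /astar.
      have he := expR_ge1Dx (L * c k).
      have hck := hc k; have hpk := hp k.
      have hpos : 0 < 1 + expR (L * c k) by have := expR_gt0 (L * c k); lra.
      rewrite -subr_ge0.
      have -> : p k / L - p k / (1 + expR (L * c k)) * c k =
        p k * (1 + expR (L * c k) - c k * L) / (L * (1 + expR (L * c k))).
        field; apply/andP; split; apply/negP => /eqP h; move: h; lra.
      apply: divr_ge0; last by apply: mulr_ge0; lra.
      apply: mulr_ge0; nra.
    apply: (le_lt_trans h1); rewrite -mulr_suml -/S.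
    rewrite ltr_pdivrMr //.
    have -> : B * L = 2 * (S + 1) by rewrite /L; field; apply/negP => /eqP h; move: h hB0; lra.
    lra.
  have cont : ({within `[0, L], continuous g})%classic.
    apply: continuous_subspaceT; exact: gsum_cont.
  have [l hl gl] : exists2 l, l \in `[0, L] & g l = B.
    apply: IVT => //; first exact: ltW.
    rewrite g0.
    have -> : Num.min (Bbar p c) (g L) = g L by apply/min_idPr; lra.
    have -> : Num.max (Bbar p c) (g L) = Bbar p c by apply/max_idPl; lra.
    apply/andP; split; lra.
  move: hl; rewrite in_itv /= => /andP [l0 lL].
  exists l; split=> //; split.
    move=> _; apply: opt => //; first by rewrite -/(g l) gl.
    by rewrite -/(g l) gl subrr mulr0.
  split=> //; by move=> h; exfalso; move: h hBb; lra.
have [lam hlam] := choice ex.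
have uniq_l : forall l1 l2 : R, astar p c l1 = astar p c l2 -> l1 = l2.
  move=> l1 l2 hh; have := congr1 (fun f => f (Ordinal hK)) hh; rewrite /astar /=.
  move=> h; set k := Ordinal hK in h.
  have hpk := hp k; have hck := hc k.
  have h1 : (1 + expR (l1 * c k))^-1 = (1 + expR (l2 * c k))^-1.
    by apply: (mulfI (x := p k)); [rewrite gt_eqF|].
  move/invr_inj/addrI/expR_inj: h1 => h2.
  have ck0 : c k != 0 by rewrite gt_eqF.
  exact: (mulIf ck0 h2).
exists lam; split.
  split; first by move=> B _; exact: (hlam B).1.
  split.
    move=> B1 B2 h1 h1' h2 h2' e.
    by rewrite -((hlam B1).2.2.1 h1 h1') -((hlam B2).2.2.1 h2 h2') e.
  split; first by move=> B h; exact: (hlam B).2.2.2 h.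
  move=> B h; exact: (hlam B).2.1 h.
move=> lam' [_ [_ [_ h4]]] B hB.
apply: uniq_l.
have u1 := h4 B hB; have u2 := (hlam B).2.1 hB.
exact: u2.2 _ u1.1.
Qed.
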